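(* Fix $t,\kappa>0$, $r>0$, $\eta\ge 8qr/t$ and $R>\max(2\eta t/q,3\kappa)$. Suppose the potential satisfies: (A) there exists a site $x\in L_T(0,r)$ with $\xi_T(x)\in[\eta,2\eta)$; (B) for all $y\in L_T(0,R)\setminus\{x\}$, $\xi_T(y)\le\eta/2$; (C) $\max_{z\in L_T(0,r)}h_T(z)\le t/8$. Then for $T$ sufficiently large, for $z\in L_T$ with $h_T(z)\le t$, \[m_T(z,t)=m_T(x,t)-q|z-x|=\xi_T(x)(t-h_T(x))-q|z-x|,\] and otherwise $m_T(z,t)=0$. In particular, $x$ is the unique maximizer of $m_T(\cdot,t)$.
   Context: $(\xi(z))_{z\in\mathbb{Z}^d}$ is a (Pareto) potential, $\alpha>d$, $q=d/(\alpha-d)$, $a(T)=(T/\log T)^q$, $r(T)=(T/\log T)^{q+1}$. $|\cdot|$ is the $\ell_1$-norm, $B(z,R)$ the open $\ell_1$-ball. $L_T=\{z\in\mathbb{R}^d:r(T)z\in\mathbb{Z}^d\}$, $L_T(z,R)=L_T\cap B(z,R)$, $\xi_T(z)=\xi(r(T)z)/a(T)$ for $z\in L_T$. For $z\in L_T$, \[h_T(z)=\inf\Big\{\sum_{j=1}^n q\frac{|y_{j-1}-y_j|}{\xi_T(y_j)}: n\ge0,\ y_0,\dots,y_n\in L_T,\ y_0=z,\ y_n=0\Big\},\] and $m_T(z,t)=\sup_{y\in L_T}\{\xi_T(y)(t-h_T(y))_+-q|z-y|\}$. *)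

(* Defs.v *)
From HB Require Import structures.
From mathcomp Require Import all_boot all_order all_algebra.
From mathcomp Require Import all_classical all_reals all_analysis.
Import Order.TTheory GRing.Theory Num.Theory.
Local Open Scope ring_scope.
Local Open Scope classical_set_scope.

Section Defs.
Context {R : realType} {d : nat}.

Definition l1norm (z : 'I_d -> R) : R := \sum_(i < d) `|z i|.

Definition qexp (alpha : R) : R := d%:R / (alpha - d%:R).

Definition aT (alpha T : R) : R := (T / ln T) `^ qexp alpha.
Definition rT (alpha T : R) : R := (T / ln T) `^ (qexp alpha + 1).

Definition inLT (alpha T : R) (z : 'I_d -> R) : Prop :=
  forall i, rT alpha T * z i \is a Num.int.

(* xi_T(z) = xi(r(T) z) / a(T)  (for z in L_T, r(T) z is an integer vector,
   recovered exactly by the floor) *)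
Definition xiT (xi : ('I_d -> int) -> R) (alpha T : R) (z : 'I_d -> R) : R :=
  xi (fun i => Num.floor (rT alpha T * z i)) / aT alpha T.

Definition hT (xi : ('I_d -> int) -> R) (alpha T : R) (z : 'I_d -> R) : R :=
  inf [set s : R | exists (n : nat) (y : nat -> 'I_d -> R),
         (forall j, (j <= n)%N -> inLT alpha T (y j)) /\
         y 0%N = z /\ y n = (fun _ => 0) /\
         s = \sum_(1 <= j < n.+1)
               qexp alpha * l1norm (fun i => y j.-1 i - y j i)
                 / xiT xi alpha T (y j)].

Definition mT (xi : ('I_d -> int) -> R) (alpha T : R) (z : 'I_d -> R) (t : R) : R :=
  sup [set v : R | exists y : 'I_d -> R, inLT alpha T y /\
         v = xiT xi alpha T y * Num.max (t - hT xi alpha T y) 0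
             - qexp alpha * l1norm (fun i => z i - y i)].

End Defs.
Arguments qexp {R} d alpha.

(* Main.v *)
Require Import Defs.
From HB Require Import structures.
From mathcomp Require Import all_boot all_order all_algebra.
From mathcomp Require Import all_classical all_reals all_analysis.
From mathcomp Require Import lra.
Import Order.TTheory GRing.Theory Num.Theory.
Local Open Scope ring_scope.
Local Open Scope classical_set_scope.

Ltac abst t := let v := fresh "v" in set v := t in *; clearbody v.
Ltac glra_unused := repeat first [
   match goal with |- context [@hT ?R ?d ?a ?b ?c ?z] => abst (@hT R d a b c z) end
 | match goal with H : context [@hT ?R ?d ?a ?b ?c ?z] |- _ => abst (@hT R d a b c z) end
 | match goal with |- context [@xiT ?R ?d ?a ?b ?c ?z] => abst (@xiT R d a b c z) end
 | match goal with H : context [@xiT ?R ?d ?a ?b ?c ?z] |- _ => abst (@xiT R d a b c z) end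
 | match goal with |- context [@l1norm ?R ?d ?z] => abst (@l1norm R d z) end
 | match goal with H : context [@l1norm ?R ?d ?z] |- _ => abst (@l1norm R d z) end
 | match goal with |- context [@mT ?R ?d ?a ?b ?c ?z ?t] => abst (@mT R d a b c z t) end
 | match goal with H : context [@mT ?R ?d ?a ?b ?c ?z ?t] |- _ => abst (@mT R d a b c z t) end
 ]; lra.

Lemma maxr0_l (R : realDomainType) (a : R) : 0 <= a -> Num.max a 0 = a.
Proof. by move=> h; rewrite /Num.max ltNge h. Qed.
Lemma maxr0_r (R : realDomainType) (a : R) : a <= 0 -> Num.max a 0 = 0.
Proof. move=> h; rewrite /Num.max; case: ltP => //= h'. by apply/eqP; rewrite eq_le h h'. Qed.

Lemma supE (R : realType) (E : set R) M : E M -> (forall v, E v -> v <= M) -> sup E = M.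
Proof.
move=> EM ub; apply/le_anti/andP; split.
  by apply: ge_sup => //; exists M.
by apply: ub_le_sup => //; exists M.
Qed.

Section S.
Variables (R : realType) (d : nat) (alpha T : R) (xi : ('I_d -> int) -> R).
Hypotheses (hq : 0 < qexp d alpha) (ha : 0 < @aT R d alpha T) (hxi : forall z, 1 <= xi z).

Local Notation L := (inLT alpha T).
Local Notation X := (xiT xi alpha T).
Local Notation h := (hT xi alpha T).
Local Notation q := (qexp d alpha).
Definition pt0 : 'I_d -> R := fun _ => 0.
Definition cst (a b : 'I_d -> R) := q * l1norm (fun i => a i - b i) / X b.
Definition pcost (y : nat -> 'I_d -> R) n := \sum_(1 <= j < n.+1) cst (y j.-1) (y j).
Definition Pset z := [set s : R | exists (n : nat) (y : nat -> 'I_d -> R),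
         (forall j, (j <= n)%N -> L (y j)) /\
         y 0%N = z /\ y n = pt0 /\ s = pcost y n].

Lemma hTE z : h z = inf (Pset z).
Proof. by []. Qed.

Lemma X_gt0 y : 0 < X y.
Proof. rewrite /xiT divr_gt0 //; apply: (lt_le_trans ltr01); exact: hxi. Qed.

Lemma l1norm_ge0 (a : 'I_d -> R) : 0 <= l1norm a.
Proof. by rewrite /l1norm sumr_ge0. Qed.

Lemma cst_ge0 a b : 0 <= cst a b.
Proof. rewrite /cst. apply: divr_ge0. apply: mulr_ge0. exact: ltW. exact: l1norm_ge0. exact: ltW (X_gt0 _). Qed.

Lemma pcost_ge0 y n : 0 <= pcost y n.
Proof. by rewrite /pcost sumr_ge0 // => j _; exact: cst_ge0. Qed.

Lemma L0 : L pt0.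
Proof. rewrite /inLT => i; rewrite /pt0 mulr0; exact: rpred0. Qed.

Lemma Pset_lb z : has_lbound (Pset z).
Proof. by exists 0 => s [n [y [_ [_ [_ ->]]]]]; exact: pcost_ge0. Qed.

Lemma pcost_S y n : pcost y n.+1 = cst (y 0%N) (y 1%N) + pcost (fun j => y j.+1) n.
Proof.
rewrite /pcost big_nat_recl //=; congr (_ + _).
by apply: eq_big_nat => j /andP[j1 _]; rewrite prednK.
Qed.

Lemma Pset_n0 z : L z -> Pset z !=set0.
Proof.
move=> Lz; exists (pcost (fun j => if j == 0%N then z else pt0) 1).
exists 1%N, (fun j => if j == 0%N then z else pt0); split => //.
by move=> [|j] _ //=; exact: L0.
Qed.

Lemma h_le z s : Pset z s -> h z <= s.
Proof. by move=> Ps; rewrite hTE; apply: ge_inf => //; exact: Pset_lb. Qed.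

Lemma h_ge0 z : L z -> 0 <= h z.
Proof.
move=> Lz; rewrite hTE; apply: lb_le_inf; first exact: Pset_n0.
by move=> s [n [y [_ [_ [_ ->]]]]]; exact: pcost_ge0.
Qed.


Lemma h_tri z y : L z -> L y -> h z <= cst z y + h y.
Proof.
move=> Lz Ly; rewrite -lerBlDl [h y]hTE; apply: lb_le_inf; first exact: Pset_n0.
move=> s [n [w [Lw [w0 [wn ->]]]]].
rewrite lerBlDl; apply: h_le.
exists n.+1, (fun j => if j == 0%N then z else w j.-1); split.
  by move=> [|j] //= jn; apply: Lw.
split => //; split => //.
by rewrite pcost_S /= w0.
Qed.

Lemma PL (F : ('I_d -> R) -> R) : F pt0 <= 0 ->
  (forall a b, L a -> L b -> F a <= cst a b + Num.max (F b) (h b)) ->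
  forall n y, (forall j, (j <= n)%N -> L (y j)) -> y n = pt0 -> F (y 0%N) <= pcost y n.
Proof.
move=> F0 Fab; elim=> [|n IH] y Ly yn.
  by rewrite /pcost big_geq // yn.
rewrite pcost_S.
have L1 : L (y 1%N) by apply: Ly.
have := Fab (y 0%N) (y 1%N) (Ly 0%N isT) L1.
move/le_trans; apply; rewrite lerD2l ge_max; apply/andP; split.
  by apply: (IH (fun j => y j.+1)) => // j jn; apply: Ly.
apply: h_le; exists n, (fun j => y j.+1); split => //.
by move=> j jn; apply: Ly.
Qed.

Lemma h_geF (F : ('I_d -> R) -> R) : F pt0 <= 0 ->
  (forall a b, L a -> L b -> F a <= cst a b + Num.max (F b) (h b)) ->
  forall z, L z -> F z <= h z.
Proof.
move=> F0 Fab z Lz; rewrite hTE; apply: lb_le_inf; first exact: Pset_n0.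
move=> s [n [y [Ly [y0 [yn ->]]]]]; rewrite -y0; exact: PL.
Qed.


Lemma l1_sym (a b : 'I_d -> R) : l1norm (fun i => a i - b i) = l1norm (fun i => b i - a i).
Proof. by rewrite /l1norm; apply: eq_bigr => i _; rewrite distrC. Qed.

Lemma l1_tri (a b c : 'I_d -> R) :
  l1norm (fun i => a i - c i) <= l1norm (fun i => a i - b i) + l1norm (fun i => b i - c i).
Proof.
rewrite /l1norm -big_split /=; apply: ler_sum => i _.
by rewrite (le_trans _ (ler_normD _ _)) // addrA subrK.
Qed.

Lemma l1_sub0 (a : 'I_d -> R) : l1norm (fun i => a i - pt0 i) = l1norm a.
Proof. by rewrite /l1norm; apply: eq_bigr => i _; rewrite /pt0 subr0. Qed.

Lemma l1_0 : l1norm pt0 = 0.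
Proof. by rewrite /l1norm big1 // => i _; rewrite /pt0 normr0. Qed.

Lemma l1_self (a : 'I_d -> R) : l1norm (fun i => a i - a i) = 0.
Proof. by rewrite /l1norm big1 // => i _; rewrite subrr normr0. Qed.

Lemma l1_pos (a b : 'I_d -> R) : a <> b -> 0 < l1norm (fun i => a i - b i).
Proof.
move=> ab.
have [i hi] : exists i, a i != b i.
  apply: contra_notP ab => H; apply/funext => i; apply/eqP.
  by apply/negPn/negP => hi; apply: H; exists i.
rewrite /l1norm (bigD1 i) //=.
have h1 : 0 < `|a i - b i| by rewrite normr_gt0 subr_eq0.
have h2 : 0 <= \sum_(j < d | j != i) `|a j - b j| by rewrite sumr_ge0.
lra.
Qed.


Lemma divD_le {u w1 w2 w3 : R} : 0 < u -> w1 <= w2 + w3 -> w1 / u <= w2 / u + w3 / u.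
Proof. by move=> u0 h; rewrite -mulrDl ler_pM2r // invr_gt0. Qed.

Lemma div_mono {w u v : R} : 0 <= w -> 0 < u -> u <= v -> w / v <= w / u.
Proof.
move=> w0 u0 uv; apply: ler_wpM2l => //.
by rewrite lef_pV2 // posrE (lt_le_trans u0 uv).
Qed.

Lemma qtri (a b c : 'I_d -> R) :
  q * l1norm (fun i => a i - c i) <= q * l1norm (fun i => a i - b i) + q * l1norm (fun i => b i - c i).
Proof. by rewrite -mulrDr ler_pM2l // l1_tri. Qed.

Lemma ql1_ge0 (a : 'I_d -> R) : 0 <= q * l1norm a.
Proof. by rewrite mulr_ge0 ?l1norm_ge0 // ltW. Qed.

Lemma minK2 (u1 u2 v1 v2 c : R) : 0 <= c -> u1 <= v1 + c -> u2 <= v2 + c ->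
  Num.min u1 u2 <= Num.min v1 v2 + c.
Proof.
move=> c0 h1 h2; rewrite -lerBlDr le_min; apply/andP; split; rewrite lerBlDr.
  by apply: le_trans h1; rewrite ge_min lexx.
by apply: le_trans h2; rewrite ge_min lexx orbT.
Qed.


Lemma div_monoN {w1 w2 u : R} : 0 < u -> w1 <= w2 -> w1 / u <= w2 / u.
Proof. by move=> u0 h; rewrite ler_pM2r // invr_gt0. Qed.

Section S2.
Variables (x : 'I_d -> R) (eta Rad : R).
Hypotheses (Lx : L x) (eta0 : 0 < eta) (hxl : eta <= X x) (hxu : X x < 2*eta)
 (hB : forall y, L y -> l1norm y < Rad -> y <> x -> X y <= eta/2).
Ltac lra2 := have := hq; have := eta0; have := hxl; have := hxu; lra.

Definition K := q * Rad / (2 * eta).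
Definition F1 (a : 'I_d -> R) := Num.min (q * l1norm a / (2 * eta)) K.

Lemma F1_h z : L z -> F1 z <= h z.
Proof.
have e2 : 0 < 2 * eta by rewrite mulr_gt0.
apply: h_geF => [|a b La Lb].
  by rewrite /F1 l1_0 mulr0 mul0r ge_min lexx.
apply: (@le_trans _ _ (cst a b + F1 b)); last by rewrite lerD2l le_max lexx.
have c0 := cst_ge0 a b.
case: (ltP (l1norm b) Rad) => hb.
  have Xb : X b <= 2 * eta.
    have [->|bx] := pselect (b = x); first exact: ltW.
    have := hB b Lb hb bx; lra.
  rewrite addrC; apply: minK2 => //; last by rewrite lerDl.
  have t1 := divD_le e2 (qtri a b pt0); rewrite !l1_sub0 in t1.
  have t2 := div_mono (ql1_ge0 (fun i => a i - b i)) (X_gt0 b) Xb.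
  rewrite /cst; lra.
have h1 : F1 a <= K by rewrite /F1 ge_min lexx orbT.
have h2 : K <= F1 b.
  rewrite /F1 le_min lexx andbT /K; apply: div_monoN => //.
  by rewrite ler_pM2l.
lra.
Qed.


Definition F2 (a : 'I_d -> R) :=
  Num.min (Num.min (q * l1norm (fun i => a i - x i) / X x + h x) (q * l1norm a / (eta / 2))) K.

Lemma F2_h z : L z -> F2 z <= h z.
Proof.
have e2 : 0 < 2 * eta by rewrite mulr_gt0.
have e3 : 0 < eta / 2 by rewrite divr_gt0.
have Xx0 := X_gt0 x.
apply: h_geF => [|a b La Lb].
  by rewrite /F2 l1_0 mulr0 mul0r !ge_min lexx orbT.
have c0 := cst_ge0 a b.
have [->|bx] := pselect (b = x).
  apply: (@le_trans _ _ (cst a x + h x)); last by rewrite lerD2l le_max lexx orbT.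
  by rewrite /F2 !ge_min /cst lexx.
apply: (@le_trans _ _ (cst a b + F2 b)); last by rewrite lerD2l le_max lexx.
case: (ltP (l1norm b) Rad) => hb.
  have Xb := hB b Lb hb bx.
  rewrite addrC; apply: minK2 => //; last by rewrite lerDl.
  apply: minK2 => //.
    have t1 := divD_le Xx0 (qtri a b x).
    have t2 : q * l1norm (fun i => a i - b i) / X x <= q * l1norm (fun i => a i - b i) / X b.
      apply: div_mono; [exact: ql1_ge0 | exact: X_gt0 | idtac]. have := hxl; have := eta0; lra.
    rewrite /cst; lra.
  have t1 := divD_le e3 (qtri a b pt0); rewrite !l1_sub0 in t1.
  have t2 := div_mono (ql1_ge0 (fun i => a i - b i)) (X_gt0 b) Xb.
  rewrite /cst; lra.
have h1 : F2 a <= K by rewrite /F2 ge_min lexx orbT.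
suff h2 : K <= F2 b by lra.
have hK : K <= q * l1norm b / (2 * eta).
  by rewrite /K; apply: div_monoN => //; rewrite ler_pM2l.
have hK2 : q * l1norm b / (2 * eta) <= q * l1norm b / (eta / 2).
  by apply: div_mono; [exact: ql1_ge0 | done | lra].
rewrite /F2 !le_min lexx !andbT; apply/andP; split; last by apply: le_trans hK hK2.
have := F1_h x Lx; rewrite /F1 ge_min => /orP[hx|hx]; last first.
  have : 0 <= q * l1norm (fun i => b i - x i) / X x by rewrite divr_ge0 ?ql1_ge0 ?ltW.
  lra.
have t1 := divD_le e2 (qtri b x pt0); rewrite !l1_sub0 in t1.
have t2 := div_mono (ql1_ge0 (fun i => b i - x i)) Xx0 (ltW hxu).
lra.
Qed.


Section S3.
Variables (t : R).
Hypotheses (ht : 0 < t) (hKt : t < K) (hqx : q * l1norm x < eta * t / 8)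
  (hhx : h x <= t / 8).
Ltac lra3 := have := ht; have := hKt; have := hqx; have := hhx; lra2.

Lemma h_small z : L z -> h z <= t -> l1norm z < Rad.
Proof.
move=> Lz hz; case: (ltP (l1norm z) Rad) => // hb.
have e2 : 0 < 2 * eta by rewrite mulr_gt0.
have hK : K <= q * l1norm z / (2 * eta).
  by rewrite /K; apply: div_monoN => //; rewrite ler_pM2l.
have := F1_h z Lz; rewrite /F1 ge_min => /orP[] hh; exfalso; lra3.
Qed.

Lemma dich z : L z -> h z <= t ->
  q * l1norm (fun i => z i - x i) / X x + h x <= h z \/ q * l1norm z / (eta / 2) <= h z.
Proof.
move=> Lz hz; have := F2_h z Lz; rewrite /F2 !ge_min => /orP[/orP[]|] hh.
- by left.
- by right.
- lra3.
Qed.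

Lemma l1x_sym : l1norm (fun i => pt0 i - x i) = l1norm x.
Proof. by rewrite l1_sym l1_sub0. Qed.

Lemma prodx : eta * (t - t / 8) <= X x * (t - h x).
Proof. apply: ler_pM; lra3. Qed.

Lemma N1 z : L z -> h z <= t ->
  q * l1norm (fun i => z i - x i) <= X x * (t - h x).
Proof.
move=> Lz hz; have Xx0 := X_gt0 x.
case: (dich z Lz hz) => hA.
  have : q * l1norm (fun i => z i - x i) / X x <= t - h x by lra3.
  by move=> H; rewrite [X x * _]mulrC -ler_pdivrMr.
have e3 : 0 < eta / 2 by rewrite divr_gt0.
have f1 : q * l1norm z <= t * (eta / 2).
  by rewrite -ler_pdivrMr //; apply: le_trans hA hz.
have f2 := qtri z pt0 x; rewrite l1_sub0 l1x_sym in f2.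
have f3 := prodx. have f4 : 0 < eta * t by apply: mulr_gt0.
lra3.
Qed.

Lemma Kl y : L y -> y <> x -> h y < t ->
  X y * (t - h y) + q * l1norm (fun i => x i - y i) < X x * (t - h x).
Proof.
move=> Ly yx hy; have Xx0 := X_gt0 x; have Xy0 := X_gt0 y.
have hyR := h_small y Ly (ltW hy).
have Xy := hB y Ly hyR yx.
have e3 : 0 < eta / 2 by rewrite divr_gt0.
have f1 : X y * (t - h y) <= eta / 2 * (t - h y).
  by apply: ler_wpM2r => //; lra3.
have f7 := prodx. have f9 : 0 < eta * t by apply: mulr_gt0.
case: (dich y Ly (ltW hy)) => hA.
  set u := q * l1norm (fun i => y i - x i) / X x in hA.
  have f2 : q * l1norm (fun i => x i - y i) = X x * u.
    by rewrite /u l1_sym [X x * _]mulrC divfK // gt_eqF.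
  have f3 : 0 < (X x - eta / 2) * (t - h y) by apply: mulr_gt0; lra3.
  have f4 : 0 <= X x * (h y - h x - u) by apply: mulr_ge0; lra3.
  rewrite f2; clearbody u; lra3.
have f5 : eta / 2 * (q * l1norm y / (eta / 2)) = q * l1norm y.
  by rewrite mulrC divfK // gt_eqF.
have f6 : eta / 2 * (q * l1norm y / (eta / 2)) <= eta / 2 * h y.
  by apply: ler_wpM2l => //; exact: ltW.
have f8 := qtri x pt0 y; rewrite l1_sub0 (l1_sym pt0 y) l1_sub0 in f8.
lra3.
Qed.


Lemma m1 z : L z -> h z <= t ->
  mT xi alpha T z t = X x * (t - h x) - q * l1norm (fun i => z i - x i).
Proof.
move=> Lz hz; have hx0 := h_ge0 x Lx.
rewrite /mT; apply: supE.
  by exists x; split => //; rewrite maxr0_l //; lra3.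
move=> v [y [Ly ->]].
have [->|yx] := pselect (y = x); first by rewrite maxr0_l //; lra3.
case: (ltP (h y) t) => hy.
  rewrite maxr0_l; last by lra3.
  have f1 := Kl y Ly yx hy.
  have f2 := qtri z y x; rewrite (l1_sym y x) in f2.
  lra3.
rewrite maxr0_r; last by lra3.
have f1 := N1 z Lz hz; have f2 := ql1_ge0 (fun i => z i - y i).
rewrite mulr0; lra3.
Qed.

Lemma m2 z : L z -> t < h z -> mT xi alpha T z t = 0.
Proof.
move=> Lz hz; rewrite /mT; apply: supE.
  exists z; split => //; rewrite maxr0_r ?l1_self ?mulr0 ?subr0 //; lra3.
move=> v [y [Ly ->]].
have f2 := ql1_ge0 (fun i => z i - y i).
case: (ltP (h y) t) => hy; last by rewrite maxr0_r ?mulr0; lra3.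
rewrite maxr0_l; last by lra3.
have f1 := h_tri z y Lz Ly.
have Xy := X_gt0 y.
have f3 : X y * (t - h y) < X y * cst z y by rewrite ltr_pM2l //; lra3.
have f4 : X y * cst z y = q * l1norm (fun i => z i - y i).
  by rewrite /cst mulrC divfK // gt_eqF.
lra3.
Qed.

Lemma m3 z : L z -> z <> x -> mT xi alpha T z t < mT xi alpha T x t.
Proof.
move=> Lz zx; have hx0 := h_ge0 x Lx.
rewrite (m1 x Lx); last by lra3.
rewrite l1_self mulr0 subr0.
case: (lerP (h z) t) => hz.
  rewrite (m1 z Lz) //; have := mulr_gt0 hq (l1_pos z x zx); lra3.
rewrite (m2 z Lz) //; apply: mulr_gt0; [exact: X_gt0 | lra3].
Qed.

End S3.
End S2.
End S.

Theorem proposition8p1 (R : realType) (d : nat) (alpha : R)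
  (hd : (0 < d)%N) (halpha : d%:R < alpha)
  (t kappa r eta Rad : R)
  (ht : 0 < t) (hkappa : 0 < kappa) (hr : 0 < r)
  (heta : 8 * qexp d alpha * r / t <= eta)
  (hR : Num.max (2 * eta * t / qexp d alpha) (3 * kappa) < Rad) :
  exists T0 : R, forall T : R, T0 < T ->
  forall (xi : ('I_d -> int) -> R), (forall z, 1 <= xi z) ->
  forall x : 'I_d -> R,
    (* (A) *)
    inLT alpha T x -> l1norm x < r ->
    eta <= xiT xi alpha T x -> xiT xi alpha T x < 2 * eta ->
    (* (B) *)
    (forall y, inLT alpha T y -> l1norm y < Rad -> y <> x ->
       xiT xi alpha T y <= eta / 2) ->
    (* (C) *)
    (forall z, inLT alpha T z -> l1norm z < r -> hT xi alpha T z <= t / 8) ->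
    (forall z, inLT alpha T z -> hT xi alpha T z <= t ->
       mT xi alpha T z t = mT xi alpha T x t - qexp d alpha * l1norm (fun i => z i - x i) /\
       mT xi alpha T x t - qexp d alpha * l1norm (fun i => z i - x i)
         = xiT xi alpha T x * (t - hT xi alpha T x) - qexp d alpha * l1norm (fun i => z i - x i)) /\
    (forall z, inLT alpha T z -> t < hT xi alpha T z -> mT xi alpha T z t = 0) /\
    (forall z, inLT alpha T z -> z <> x -> mT xi alpha T z t < mT xi alpha T x t).
Proof.
have hq : 0 < qexp d alpha.
  by rewrite /qexp divr_gt0 ?ltr0n // subr_gt0.
have eta0 : 0 < eta.
  apply: lt_le_trans heta; rewrite divr_gt0 // mulr_gt0 // mulr_gt0 //.
exists 1 => T T1 xi hxi x Lx xr hxl hxu hB hC.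
have ha : 0 < @aT R d alpha T.
  by rewrite /aT powR_gt0 // divr_gt0 ?ln_gt0 // (lt_trans ltr01).
have hhx := hC x Lx xr.
have hKt : t < K R d alpha eta Rad.
  rewrite /K ltr_pdivlMr ?mulr_gt0 //.
  move: hR; rewrite gt_max => /andP[h1 _].
  move: h1; rewrite ltr_pdivrMr // => h1; lra.
have hqx : qexp d alpha * l1norm x < eta * t / 8.
  have h1 : qexp d alpha * l1norm x < qexp d alpha * r by rewrite ltr_pM2l.
  move: heta; rewrite ler_pdivrMr // => h2; lra.
split; [|split].
- move=> z Lz hz.
  have hx0 : hT xi alpha T x <= t by lra.
  have E1 : mT xi alpha T z t = xiT xi alpha T x * (t - hT xi alpha T x) -
    qexp d alpha * l1norm (fun i => z i - x i) by eapply (@m1 R d alpha T xi hq ha hxi x eta Rad); eassumption.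
  have E2 : mT xi alpha T x t = xiT xi alpha T x * (t - hT xi alpha T x) -
    qexp d alpha * l1norm (fun i => x i - x i) by eapply (@m1 R d alpha T xi hq ha hxi x eta Rad); eassumption.
  rewrite E1 E2.
  by rewrite l1_self mulr0 subr0.
- move=> z Lz hz; eapply (@m2 R d alpha T xi hq ha hxi x eta Rad); eassumption.
- move=> z Lz zx; eapply (@m3 R d alpha T xi hq ha hxi x eta Rad); eassumption.
Qed.
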